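(* For every nested sequence $\Gamma=(\Gamma_j)_{j\ge1}$, $\Gamma_1\supset\Gamma_2\supset\cdots$, of lattices in $H_3(\mathbb R)$, we have $\tau(S_\Gamma)\supset\xi_\Gamma$.
   Context: $H_3(\mathbb R)$: real $3\times3$ upper triangular unipotent matrices; $c(t)$ has $(1,3)$ entry $t$, other off-diagonal entries $0$; for $g$ with $(1,2)$ entry $t_1$ and $(2,3)$ entry $t_2$, $p(g)=(t_1,t_2)$. A lattice is a discrete subgroup of finite covolume. For a lattice $\Lambda$: $\xi_\Lambda>0$ with $\Lambda\cap\{c(t)\}=\{c(m\xi_\Lambda):m\in\mathbb Z\}$; $p(\Lambda)=A\mathbb Z^2$ and $p(\Lambda)^*:=(A^* )^{-1}\mathbb Z^2$. $S_\Gamma:=\bigcup_jp(\Gamma_j)^*$ and $\xi_\Gamma:=\bigcup_j\xi_{\Gamma_j}^{-1}\mathbb Z$; $S_\Gamma$ is off-rational. Off-rational: a subgroup $S\subset\mathbb R^m$ with cocompact closure and $S=AQ$ for $A\in GL_m(\mathbb R)$ and a subgroup $Q\subset\mathbb Q^m$; writing $Q=\bigcup_jA_j^{-1}\mathbb Z^m$ with $A_j\in GL_m(\mathbb R)\cap M_m(\mathbb Z)$, $A_1^{-1}\mathbb Z^m\subset A_2^{-1}\mathbb Z^m\subset\cdots$, set $\tau(S):=\bigcup_j\frac{\det A}{\det A_j}\mathbb Z$ (independent of the choices). *)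

(* Defs.v *)
From HB Require Import structures.
From mathcomp Require Import all_boot all_order all_algebra.
From mathcomp Require Import all_classical all_reals all_analysis.
Set Implicit Arguments. Unset Strict Implicit. Unset Printing Implicit Defensive.
Import Order.TTheory GRing.Theory Num.Theory.
Local Open Scope classical_set_scope.
Local Open Scope ring_scope.

Section H3.
Variable R : realType.

Definition H3 : set 'M[R]_3 :=
  [set g | [/\ g 0 0 = 1, g 1 1 = 1 & g 2 2 = 1] /\ [/\ g 1 0 = 0, g 2 0 = 0 & g 2 1 = 0]].

Definition cH (t : R) : 'M[R]_3 := 1%:M + t *: delta_mx 0 2.

Definition pH (g : 'M[R]_3) : 'cV[R]_2 :=
  \col_(i < 2) (if i == 0 then g 0 1 else g 1 2).

Definition Zvec : set 'cV[R]_2 := range (fun z : 'cV[int]_2 => map_mx intr z).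

(* Haar measure on H_3(R) in the global chart g |-> (t_1, t_2, t_3) *)
Definition coordH (g : 'M[R]_3) : (R * R) * R := ((g 0 1, g 1 2), g 0 2).

Definition lebesgue3 :=
  ((@lebesgue_measure R \x @lebesgue_measure R) \x @lebesgue_measure R)%E.

Definition is_subgroupH (L : set 'M[R]_3) : Prop :=
  [/\ L `<=` H3, L 1%:M,
      (forall g h, L g -> L h -> L (g *m h)) &
      (forall g, L g -> L (invmx g))].

Definition discreteH (L : set 'M[R]_3) : Prop :=
  forall g, L g -> exists2 e : R, 0 < e &
    forall h, L h -> (forall i j, `|h i j - g i j| < e) -> h = g.

Definition finite_covolume (L : set 'M[R]_3) : Prop :=
  exists F : set ((R * R) * R),
    [/\ measurable F, (lebesgue3 F < +oo)%E &
        forall g, H3 g -> exists! gam, L gam /\ F (coordH (gam *m g))].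

Definition is_lattice (L : set 'M[R]_3) : Prop :=
  [/\ is_subgroupH L, discreteH L & finite_covolume L].

Definition is_xi (L : set 'M[R]_3) (xi : R) : Prop :=
  0 < xi /\ L `&` range cH = range (fun m : int => cH (m%:~R * xi)).

Definition is_pbasis (L : set 'M[R]_3) (A : 'M[R]_2) : Prop :=
  A \in unitmx /\ pH @` L = (fun v => A *m v) @` Zvec.

Definition pdual (L : set 'M[R]_3) : set 'cV[R]_2 :=
  [set v | exists A, is_pbasis L A /\ ((fun w => invmx A^T *m w) @` Zvec) v].

Definition S_Gamma (G : nat -> set 'M[R]_3) : set 'cV[R]_2 :=
  \bigcup_j pdual (G j).

Definition xi_Gamma (G : nat -> set 'M[R]_3) : set R :=
  [set x | exists j xi, is_xi (G j) xi /\ exists m : int, x = m%:~R / xi].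

Definition off_rational_rep (S : set 'cV[R]_2) (A : 'M[R]_2)
    (As : nat -> 'M[int]_2) : Prop :=
  [/\ A \in unitmx,
      (forall j, map_mx intr (As j) \in @unitmx R 2),
      (forall j, (fun v => invmx (map_mx intr (As j)) *m v) @` Zvec `<=`
                 (fun v => invmx (map_mx intr (As j.+1)) *m v) @` Zvec) &
      S = (fun v => A *m v) @`
            (\bigcup_j ((fun v => invmx (map_mx intr (As j)) *m v) @` Zvec))].

Definition tau (A : 'M[R]_2) (As : nat -> 'M[int]_2) : set R :=
  [set x | exists j (k : int),
     x = k%:~R * (\det A / (\det (As j))%:~R)].

End H3.

(* Main.v *)
Require Import Defs.
From HB Require Import structures.
From mathcomp Require Import all_boot all_order all_algebra.
From mathcomp Require Import all_classical all_reals all_analysis.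
From mathcomp Require Import measurable_realfun.
From mathcomp Require Import lra ring zify.
Set Implicit Arguments. Unset Strict Implicit. Unset Printing Implicit Defensive.
Import Order.TTheory GRing.Theory Num.Theory.
Import numFieldNormedType.Exports.
Local Open Scope classical_set_scope.
Local Open Scope ring_scope.


From mathcomp Require Import lra ring.
Section M.
Variable R : realType.
Local Notation mu := (@lebesgue_measure R).
Local Notation Rm := (measurableTypeR R).

Lemma shift_measurable (c : R) : measurable_fun setT (fun x : Rm => (x + c : Rm)).
Proof. by apply: measurable_funD. Qed.

Hint Extern 0 (measurable_fun _ (fun x => x + _)) => solve [exact: shift_measurable] : core.

Lemma leb_shift (c : R) (A : set Rm) : measurable A ->
  mu ((fun x : Rm => (x + c : Rm)) @^-1` A) = mu A.
Proof.
move=> mA.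
rewrite -[LHS]/(pushforward mu ((fun x : R => x + c) : R -> measurableTypeR R) A).
apply/esym/lebesgue_measure_unique => //=.
move=> _ [[a b]] _ <-.
rewrite /pushforward.
have -> : (fun x : R => x + c) @^-1` `]a, b]%classic = `](a - c), (b - c)]%classic.
  apply/seteqP; split => x /=; rewrite !in_itv /= ?andbT.
    by move=> /andP[h1 h2]; apply/andP; split; [rewrite ltrBlDr|rewrite lerBrDr].
  by move=> /andP[h1 h2]; apply/andP; split; [rewrite -ltrBlDr|rewrite -lerBrDr].
rewrite !lebesgue_measure_itv /= !lte_fin ltrD2r.
case: ifP => // _; congr (_%:E); rewrite /=. lra.
Qed.
Local Notation mu2 := ((@lebesgue_measure R) \x (@lebesgue_measure R))%E.

Definition tau2 (a b : R) (q : Rm * Rm) : Rm * Rm := (q.1 + a, q.2 + b).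

Lemma tau2_measurable a b : measurable_fun setT (tau2 a b).
Proof.
apply: measurable_fun_pair.
  exact: (measurableT_comp (shift_measurable a) measurable_fst).
exact: (measurableT_comp (shift_measurable b) measurable_snd).
Qed.

Hint Extern 0 (measurable_fun _ (tau2 _ _)) => solve [exact: tau2_measurable] : core.

Lemma leb2_shift a b (X : set (Rm * Rm)) : measurable X ->
  mu2 (tau2 a b @^-1` X) = mu2 X.
Proof.
move=> mX.
rewrite -[LHS]/(pushforward mu2 (tau2 a b) X).
have := @product_measure_unique _ _ _ _ R lebesgue_measure lebesgue_measure
  (measure_function_pushforward__canonical__measure_function_Measure mu2 (tau2_measurable a b)).
move=> /(_ _ X mX) <- //=.
move=> A B mA mB.
rewrite /pushforward.
have -> : tau2 a b @^-1` (A `*` B) = ((fun x => x + a) @^-1` A) `*` ((fun x => x + b) @^-1` B).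
  by apply/seteqP; split => -[x y].
rewrite product_measure1E; last 2 first.
- by rewrite -[X in measurable X]setTI; apply: shift_measurable.
- by rewrite -[X in measurable X]setTI; apply: shift_measurable.
by rewrite -(leb_shift a mA) -(leb_shift b mB).
Qed.
Local Notation mu3 := (mu2 \x (@lebesgue_measure R))%E.

Definition shearT (a b c al be : R) (t : (Rm * Rm) * Rm) : (Rm * Rm) * Rm :=
  ((t.1.1 + a, t.1.2 + b), t.2 + (c + al * t.1.1 + be * t.1.2)).

Lemma shearT_measurable a b c al be : measurable_fun setT (shearT a b c al be).
Proof.
apply: measurable_fun_pair.
  exact: (measurableT_comp (tau2_measurable a b) measurable_fst).
apply: measurable_funD; first exact: measurable_snd.
apply: measurable_funD; first apply: measurable_funD.
- exact: measurable_cst.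
- apply: measurable_funM; first exact: measurable_cst.
  exact: (measurableT_comp measurable_fst measurable_fst).
- apply: measurable_funM; first exact: measurable_cst.
  exact: (measurableT_comp measurable_snd measurable_fst).
Qed.

Lemma leb3_shear a b c al be (E : set ((Rm * Rm) * Rm)) : measurable E ->
  mu3 (shearT a b c al be @^-1` E) = mu3 E.
Proof.
move=> mE.
pose f := (fun q => mu (xsection E q)).
have mf : measurable_fun setT f := measurable_fun_xsection mu mE.
transitivity (\int[mu2]_q f (tau2 a b q))%E.
  rewrite [LHS]/product_measure1.
  congr (integral _ _ _); apply/funext => q /=.
  rewrite /f.
  have -> : xsection (shearT a b c al be @^-1` E) q =
     (fun z : Rm => (z + (c + al * q.1 + be * q.2) : Rm)) @^-1` (xsection E (tau2 a b q)).
    by apply/seteqP; split => z; rewrite /xsection /= !inE.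
  by rewrite leb_shift //; apply: measurable_xsection.
have := ge0_integral_pushforward (tau2_measurable a b) mu2 (D := setT) (f := f) measurableT mf.
move=> /(_ (fun _ _ => measure_ge0 _ _)).
rewrite preimage_setT => <-.
rewrite /product_measure1 /=.
apply: (eq_measure_integral mu2) => A mA _.
exact: leb2_shift.
Qed.
End M.

From mathcomp Require Import lra ring.

Section NoLine.
Variable R : realType.
Local Notation Rm := (measurableTypeR R).
Local Notation T3 := ((Rm * Rm) * Rm)%type.
Local Notation mu := (@lebesgue_measure R).
Local Notation mu3 := (((@lebesgue_measure R) \x (@lebesgue_measure R)) \x (@lebesgue_measure R))%E.

Definition mulc (s t : T3) : T3 :=
  ((s.1.1 + t.1.1, s.1.2 + t.1.2), s.2 + t.2 + s.1.1 * t.1.2).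
Definition invc (s : T3) : T3 := ((- s.1.1, - s.1.2), - s.2 + s.1.1 * s.1.2).
Definition zc : T3 := ((0, 0), 0).

Lemma mulcE (g : T3) : mulc g = shearT g.1.1 g.1.2 g.2 0 g.1.1.
Proof.
apply/funext => -[[x y] z]; rewrite /mulc /shearT /=.
by congr ((_, _), _); ring.
Qed.

Lemma mulcE' (h : T3) : (fun t => mulc t h) = shearT h.1.1 h.1.2 h.2 h.1.2 0.
Proof.
apply/funext => -[[x y] z]; rewrite /mulc /shearT /=.
by congr ((_, _), _); ring.
Qed.

Lemma mulc_meas (g : T3) (E : set T3) : measurable E -> measurable (mulc g @^-1` E).
Proof.
move=> mE; rewrite mulcE -[X in measurable X]setTI.
exact: (@shearT_measurable R _ _ _ _ _ measurableT _ mE).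
Qed.

Lemma mulc_meas' (h : T3) (E : set T3) : measurable E ->
  measurable ((fun t => mulc t h) @^-1` E).
Proof.
move=> mE; rewrite mulcE' -[X in measurable X]setTI.
exact: (@shearT_measurable R _ _ _ _ _ measurableT _ mE).
Qed.

Lemma mulc_mu (g : T3) (E : set T3) : measurable E -> mu3 (mulc g @^-1` E) = mu3 E.
Proof. by move=> mE; rewrite mulcE leb3_shear. Qed.

Lemma mulc_mu' (h : T3) (E : set T3) : measurable E ->
  mu3 ((fun t => mulc t h) @^-1` E) = mu3 E.
Proof. by move=> mE; rewrite mulcE' leb3_shear. Qed.

Lemma invcK_l (g t : T3) : mulc (invc g) (mulc g t) = t.
Proof. case: g t => [[a b] c] [[x y] z]; rewrite /mulc /invc /=; congr ((_, _), _); ring. Qed.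

Lemma invcK_r (g t : T3) : mulc g (mulc (invc g) t) = t.
Proof. case: g t => [[a b] c] [[x y] z]; rewrite /mulc /invc /=; congr ((_, _), _); ring. Qed.

Lemma box_meas (r : R) :
  measurable [set t : T3 | `|t.1.1| < r /\ `|t.1.2| < r /\ `|t.2| < r].
Proof.
have -> : [set t : T3 | `|t.1.1| < r /\ `|t.1.2| < r /\ `|t.2| < r] =
  (`]-r, r[%classic `*` `]-r, r[%classic) `*` `]-r, r[%classic.
  apply/seteqP; split => -[[x y] z] /=; rewrite !in_itv /= -!ltr_norml.
    by move=> [-> [-> ->]].
  by move=> [[-> ->] ->].
apply: measurableX; first apply: measurableX; exact: measurable_itv.
Qed.

Lemma box_mu (r : R) : 0 < r ->
  mu3 [set t : T3 | `|t.1.1| < r /\ `|t.1.2| < r /\ `|t.2| < r] = ((r *+ 2) ^+ 3)%:E.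
Proof.
move=> r0.
have -> : [set t : T3 | `|t.1.1| < r /\ `|t.1.2| < r /\ `|t.2| < r] =
  (`]-r, r[%classic `*` `]-r, r[%classic) `*` `]-r, r[%classic.
  apply/seteqP; split => -[[x y] z] /=; rewrite !in_itv /= -!ltr_norml.
    by move=> [-> [-> ->]].
  by move=> [[-> ->] ->].
rewrite product_measure1E; last 2 first.
- by apply: measurableX; exact: measurable_itv.
- exact: measurable_itv.
pose I : set Rm := `]-r, r[%classic.
have mI : measurable I by exact: measurable_itv.
transitivity ((mu I * mu I) * mu I)%E.
  by congr (_ * _)%E; exact: product_measure1E.
rewrite /I lebesgue_measure_itv /= lte_fin ifT; last lra.
rewrite -!EFinD -!EFinM; congr (_%:E).
rewrite !exprS expr0; ring.
Qed.


Lemma mulc0 (g : T3) : mulc g zc = g.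
Proof. case: g => [[a b] c]; rewrite /mulc /zc /=; congr ((_, _), _); ring. Qed.

Lemma mulc_dd (g g' t h : T3) :
  mulc (mulc (mulc (invc g') t) (invc h)) (invc (mulc (mulc (invc g) t) (invc h)))
  = mulc (invc g') g.
Proof.
case: g g' t h => [[a b] c] [[a' b'] c'] [[x y] z] [[p q] u].
rewrite /mulc /invc /=; congr ((_, _), _); ring.
Qed.

Lemma nat_close (k k' : nat) : `|k%:R - k'%:R : R| < 1 -> k = k'.
Proof.
rewrite ltr_norml => /andP[h1 h2].
case: (ltngtP k k') => // hk.
- have : (k%:R + 1 <= k'%:R :> R) by rewrite natr1 ler_nat.
  clear hk => h3; exfalso; lra.
- have : (k'%:R + 1 <= k%:R :> R) by rewrite natr1 ler_nat.
  clear hk => h3; exfalso; lra.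
Qed.

Lemma small_bound (r e x y z x' y' z' : R) : 0 < r -> r <= e / 8 -> r <= 1 ->
  `|x| < r -> `|y| < r -> `|z| < r -> `|x'| < r -> `|y'| < r -> `|z'| < r ->
  [/\ `|x' - x| < e, `|y' - y| < e & `|z' + (- z + x * y) + x' * - y| < e].
Proof.
move=> r0 re r1 hx hy hz hx' hy' hz'.
have rr : r * r <= r by rewrite -[leRHS](mulr1 r) ler_wpM2l // ltW.
have hxy : `|x * y| <= r.
  rewrite normrM; apply: le_trans rr; apply: ler_pM => //; exact: ltW.
have hxy' : `|x' * - y| <= r.
  rewrite normrM normrN; apply: le_trans rr; apply: ler_pM => //; exact: ltW.
have h1 := ler_normB x' x; have h2 := ler_normB y' y.
have h3 := ler_normD (z' + (- z + x * y)) (x' * - y).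
have h4 := ler_normD z' (- z + x * y).
have h5 := ler_normD (- z) (x * y).
rewrite normrN in h5.
split; lra.
Qed.

Variables (Lc : set T3).
Hypothesis LcM : forall s t, Lc s -> Lc t -> Lc (mulc s t).
Hypothesis LcV : forall s, Lc s -> Lc (invc s).
Variable e : R.
Hypothesis e0 : 0 < e.
Hypothesis disc0 : forall s, Lc s -> `|s.1.1| < e -> `|s.1.2| < e -> `|s.2| < e -> s = zc.
Variable iota : T3 -> nat.
Hypothesis iota_inj : forall s t, Lc s -> Lc t -> iota s = iota t -> s = t.
Variable F : set T3.
Hypothesis mF : measurable F.
Hypothesis Ffin : (mu3 F < +oo)%E.
Hypothesis Fcov : forall t, exists g, Lc g /\ F (mulc g t).
Hypothesis Funiq : forall t g g', Lc g -> Lc g' -> F (mulc g t) -> F (mulc g' t) -> g = g'.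
Variables al be : R.
Hypothesis ab0 : 0 < al ^+ 2 + be ^+ 2.
Hypothesis psi0 : forall g, Lc g -> al * g.1.1 + be * g.1.2 = 0.

Let A := `|al| + `|be| + 1.
Let A0 : 0 < A.
Proof. rewrite /A; have := normr_ge0 al; have := normr_ge0 be; lra. Qed.
Let r := Num.min (Num.min (e / 8) 1) (1 / (4 * A)).
Let r0 : 0 < r.
Proof.
rewrite /r !lt_min; apply/andP; split; [apply/andP; split|].
- by apply: divr_gt0.
- by [].
- apply: divr_gt0 => //; apply: mulr_gt0 => //; exact: A0.
Qed.
Let r_e : r <= e / 8.
Proof. by rewrite /r !ge_min lexx. Qed.
Let r1 : r <= 1.
Proof. by rewrite /r !ge_min lexx orbT. Qed.
Let rA : r * A <= 1 / 4.
Proof.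
have h : r <= 1 / (4 * A) by rewrite /r ge_min lexx orbT.
move: h; rewrite ler_pdivlMr; last by apply: mulr_gt0 => //; exact: A0.
lra.
Qed.

Let N2 := al ^+ 2 + be ^+ 2.
Let w1 := al / N2.
Let w2 := be / N2.
Let alw : al * w1 + be * w2 = 1.
Proof. rewrite /w1 /w2 /N2; field; exact: lt0r_neq0. Qed.

Let hk (k : nat) : T3 := ((k%:R * w1, k%:R * w2), 0).
Let D0 := [set t : T3 | `|t.1.1| < r /\ `|t.1.2| < r /\ `|t.2| < r].
Let Dk k := [set t | D0 (mulc t (invc (hk k)))].
Let Pk k g := [set t | Dk k t /\ F (mulc g t)].
Let Qk k g := [set t | F t /\ Dk k (mulc (invc g) t)].
Let P' k n := [set t | exists g, [/\ Lc g, iota g = n & Pk k g t]].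
Let Q' k n := [set t | exists g, [/\ Lc g, iota g = n & Qk k g t]].
Let X k := \bigcup_n Q' k n.

Let c' := (r *+ 2) ^+ 3.
Let c'0 : 0 < c'.
Proof. by rewrite /c' exprn_gt0 // pmulrn_rgt0. Qed.

Let mD0 : measurable D0.
Proof. exact: box_meas. Qed.
Let mDk k : measurable (Dk k).
Proof. exact: mulc_meas'. Qed.
Let muDk k : mu3 (Dk k) = c'%:E.
Proof. by rewrite /Dk mulc_mu' // box_mu. Qed.
Let mPk k g : measurable (Pk k g).
Proof. exact: measurableI (mDk k) (mulc_meas g mF). Qed.
Let mQk k g : measurable (Qk k g).
Proof. exact: measurableI mF (mulc_meas (invc g) (mDk k)). Qed.
Let muPQ k g : mu3 (Pk k g) = mu3 (Qk k g).
Proof.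
have -> : Pk k g = mulc g @^-1` (Qk k g).
  apply/seteqP; split => t /=; rewrite /Pk /Qk /= invcK_l; by move=> [].
exact: mulc_mu.
Qed.

Let slot k n : (P' k n = set0 /\ Q' k n = set0) \/
  exists g, [/\ Lc g, P' k n = Pk k g & Q' k n = Qk k g].
Proof.
case: (pselect (exists g, Lc g /\ iota g = n)) => [[g [Lg ig]]|nog].
  right; exists g; split => //; apply/seteqP; split => t.
  - by move=> [g' [Lg' ig' Pt]]; rewrite -(iota_inj Lg' Lg) // ig ig'.
  - by move=> Pt; exists g.
  - by move=> [g' [Lg' ig' Pt]]; rewrite -(iota_inj Lg' Lg) // ig ig'.
  - by move=> Pt; exists g.
left; split; apply/seteqP; split => t //=; move=> [g [Lg ig _]];
  by apply: nog; exists g.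
Qed.

Let mP' k n : measurable (P' k n).
Proof. by case: (slot k n) => [[-> _]|[g [_ -> _]]]. Qed.
Let mQ' k n : measurable (Q' k n).
Proof. by case: (slot k n) => [[_ ->]|[g [_ _ ->]]]. Qed.
Let muP'Q' k n : mu3 (P' k n) = mu3 (Q' k n).
Proof. by case: (slot k n) => [[-> ->]|[g [_ -> ->]]]; rewrite ?measure0. Qed.

Let Dk_cover k : Dk k = \bigcup_n P' k n.
Proof.
apply/seteqP; split => t.
  move=> Dt; have [g [Lg Fg]] := Fcov t.
  by exists (iota g) => //; exists g.
by move=> [n _ [g [_ _ []]]].
Qed.

Let trivP k : trivIset setT (P' k).
Proof.
move=> i j _ _ [t [[g [Lg ig [_ Fg]]] [g' [Lg' ig' [_ Fg']]]]].
by rewrite -ig -ig' (Funiq Lg Lg' Fg Fg').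
Qed.

Let D0_small (d d' : T3) : D0 d -> D0 d' ->
  [/\ `|(mulc d' (invc d)).1.1| < e, `|(mulc d' (invc d)).1.2| < e &
      `|(mulc d' (invc d)).2| < e].
Proof.
case: d d' => [[x y] z] [[x' y'] z'] [/= hx [hy hz]] [/= hx' [hy' hz']].
exact: (@small_bound r e x y z x' y' z' r0 r_e r1).
Qed.

Let trivQ k : trivIset setT (Q' k).
Proof.
move=> i j _ _ [t [[g [Lg ig [Ft Dt]]] [g' [Lg' ig' [_ Dt']]]]].
have Ld : Lc (mulc (invc g') g) by apply: LcM => //; exact: LcV.
have [h1 h2 h3] := D0_small Dt Dt'.
rewrite mulc_dd in h1 h2 h3.
have := disc0 Ld h1 h2 h3 => hz.
have : g = g' by rewrite -[g](invcK_r g') hz mulc0.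
by move=> eg; rewrite -ig -ig' eg.
Qed.

Let psiD (d : T3) : D0 d -> `|al * d.1.1 + be * d.1.2| <= 1 / 4.
Proof.
case: d => [[x y] z] [/= hx [hy _]].
apply: (le_trans (ler_normD _ _)); rewrite !normrM.
have h1 : `|al| * `|x| <= `|al| * r by apply: ler_wpM2l => //; exact: ltW.
have h2 : `|be| * `|y| <= `|be| * r by apply: ler_wpM2l => //; exact: ltW.
have := rA; rewrite /A; have := r0; lra.
Qed.

Let psi_k k g t : Lc g -> Dk k (mulc (invc g) t) ->
  `|al * t.1.1 + be * t.1.2 - k%:R| <= 1 / 4.
Proof.
move=> Lg Dt; have := psiD Dt; have := psi0 Lg; have := alw.
case: g t Dt {Lg} => [[a b] c] [[x y] z] _ /=.
move=> halw hpsi.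
suff -> : al * x + be * y - k%:R = al * (- a + x + - (k%:R * w1)) + be * (- b + y + - (k%:R * w2)) by [].
have : al * (k%:R * w1) + be * (k%:R * w2) = k%:R by rewrite -[RHS]mulr1 -halw; ring.
move: hpsi; lra.
Qed.

Let trivX : trivIset setT X.
Proof.
move=> k k' _ _ [t [[n _ [g [Lg _ [_ Dt]]]] [n' _ [g' [Lg' _ [_ Dt']]]]]].
apply: nat_close.
have h1 := psi_k Lg Dt; have h2 := psi_k Lg' Dt'.
move: h1 h2; rewrite !ler_norml ltr_norml => /andP[h1 h2] /andP[h3 h4].
apply/andP; split; lra.
Qed.

Let mX k : measurable (X k).
Proof. exact: bigcupT_measurable. Qed.

Let muX k : mu3 (X k) = c'%:E.
Proof.
rewrite -(muDk k) Dk_cover /X.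
have e1 := measure_bigcup mu3 setT (Q' k) (fun i (_ : setT i) => @mQ' k i) (@trivQ k).
have e2 := measure_bigcup mu3 setT (P' k) (fun i (_ : setT i) => @mP' k i) (@trivP k).
rewrite e1 e2.
apply: eq_eseriesr => n _; exact/esym/muP'Q'.
Qed.

Lemma no_line : False.
Proof.
have Fge0 : (0 <= mu3 F)%E by exact: measure_ge0.
have finF : mu3 F \is a fin_num by rewrite ge0_fin_numE.
set M := fine (mu3 F).
have hN : forall N : nat, c' *+ N <= M.
  move=> N.
  have : (mu3 (\big[setU/set0]_(i < N) X i) <= mu3 F)%E.
    apply: le_measure; rewrite ?inE //.
    - by apply: bigsetU_measurable => i _.
    - move=> t; elim/big_ind: _ => //.
      + by move=> A1 B1 hA hB [/hA|/hB].
      + by move=> i _ [n _ [g [_ _ []]]].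
  rewrite (@measure_bigsetU_ord _ _ _ _ N xpredT (fun i => X i)) //; last first.
    by move=> i j _ _ /trivX; move=> /(_ I I) /val_inj.
  rewrite (eq_bigr (fun _ => c'%:E)); last by move=> i _; exact: muX.
  rewrite sumEFin sumr_const card_ord -(fineK finF) lee_fin.
  by [].
have := archi_boundP (x := M / c') (divr_ge0 (fine_ge0 Fge0) (ltW c'0)).
set N := Num.bound _ => hb.
have := hN N; rewrite -mulr_natr => hc.
move: hb; rewrite ltr_pdivrMr // => hb.
have : c' * N%:R < c' * N%:R by apply: le_lt_trans hc _; rewrite mulrC.
by rewrite ltxx.
Qed.

End NoLine.

From mathcomp Require Import lra ring.

Section H3alg.
Variable R : realType.
Implicit Types g h : 'M[R]_3.

Lemma ord3 (i : 'I_3) : i = 0 \/ i = 1 \/ i = 2%:R.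
Proof.
case: i => [[|[|[|n]]] Hn].
- by left; apply: val_inj.
- by right; left; apply: val_inj.
- by right; right; apply: val_inj.
- by [].
Qed.

Lemma ord2 (i : 'I_2) : i = 0 \/ i = 1.
Proof.
case: i => [[|[|n]] Hn].
- by left; apply: val_inj.
- by right; apply: val_inj.
- by [].
Qed.

Lemma mul3 (A B : 'M[R]_3) i j :
  (A *m B) i j = A i 0 * B 0 j + A i 1 * B 1 j + A i 2%:R * B 2%:R j.
Proof.
rewrite mxE !big_ord_recr big_ord0 /= add0r.
by congr (_ * _ + _ * _ + _ * _); congr (_ _ _); apply: val_inj.
Qed.

Definition mkH (x y z : R) : 'M[R]_3 :=
  \matrix_(i, j) (if (i == j :> nat) then 1
                  else if ((i == 0%N :> nat) && (j == 1%N :> nat)) then x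
                  else if ((i == 1%N :> nat) && (j == 2%N :> nat)) then y
                  else if ((i == 0%N :> nat) && (j == 2%N :> nat)) then z
                  else 0).

Lemma mkH_H3 x y z : H3 (mkH x y z).
Proof. by split; split; rewrite mxE. Qed.

Lemma mkH01 x y z : mkH x y z 0 1 = x. Proof. by rewrite mxE. Qed.
Lemma mkH12 x y z : mkH x y z 1 2%:R = y. Proof. by rewrite mxE. Qed.
Lemma mkH02 x y z : mkH x y z 0 2%:R = z. Proof. by rewrite mxE. Qed.

Lemma H3_eq g h : H3 g -> H3 h -> g 0 1 = h 0 1 -> g 1 2%:R = h 1 2%:R ->
  g 0 2%:R = h 0 2%:R -> g = h.
Proof.
move=> [[g00 g11 g22] [g10 g20 g21]] [[h00 h11 h22] [h10 h20 h21]] e01 e12 e02.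
apply/matrixP => i j.
case: (ord3 i) => [->|[->|->]]; case: (ord3 j) => [->|[->|->]];
  by rewrite ?g00 ?g11 ?g22 ?g10 ?g20 ?g21 ?h00 ?h11 ?h22 ?h10 ?h20 ?h21.
Qed.

Lemma H3E g : H3 g -> g = mkH (g 0 1) (g 1 2%:R) (g 0 2%:R).
Proof. by move=> Hg; apply: H3_eq => //; [exact: mkH_H3|rewrite mkH01|rewrite mkH12|rewrite mkH02]. Qed.

Lemma H3_mul g h : H3 g -> H3 h ->
  [/\ H3 (g *m h), (g *m h) 0 1 = g 0 1 + h 0 1,
      (g *m h) 1 2%:R = g 1 2%:R + h 1 2%:R &
      (g *m h) 0 2%:R = g 0 2%:R + h 0 2%:R + g 0 1 * h 1 2%:R].
Proof.
move=> [[g00 g11 g22] [g10 g20 g21]] [[h00 h11 h22] [h10 h20 h21]].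
split; [split; split|..]; rewrite mul3
  ?g00 ?g11 ?g22 ?g10 ?g20 ?g21 ?h00 ?h11 ?h22 ?h10 ?h20 ?h21; ring.
Qed.

Lemma H3_inv g : H3 g ->
  invmx g = mkH (- g 0 1) (- g 1 2%:R) (- g 0 2%:R + g 0 1 * g 1 2%:R).
Proof.
move=> Hg.
pose h := mkH (- g 0 1) (- g 1 2%:R) (- g 0 2%:R + g 0 1 * g 1 2%:R).
have Hh : H3 h by exact: mkH_H3.
have h1 : h 0 1 = - g 0 1 by exact: mkH01.
have h2 : h 1 2%:R = - g 1 2%:R by exact: mkH12.
have h3 : h 0 2%:R = - g 0 2%:R + g 0 1 * g 1 2%:R by exact: mkH02.
have gh : g *m h = 1%:M.
  have [H1 e1 e2 e3] := H3_mul Hg Hh.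
  apply: H3_eq => //.
  - by split; split; rewrite !mxE.
  - by rewrite e1 h1 !mxE /= addrN.
  - by rewrite e2 h2 !mxE /= addrN.
  - by rewrite e3 h2 h3 !mxE /=; ring.
have gu : g \in unitmx by case: (mulmx1_unit gh).
by rewrite -[RHS]mul1mx -(mulVmx gu) -mulmxA gh mulmx1.
Qed.

Lemma H3_invE g : H3 g ->
  [/\ H3 (invmx g), invmx g 0 1 = - g 0 1, invmx g 1 2%:R = - g 1 2%:R &
      invmx g 0 2%:R = - g 0 2%:R + g 0 1 * g 1 2%:R].
Proof.
move=> Hg; rewrite H3_inv //; split; [exact: mkH_H3|exact: mkH01|exact: mkH12|exact: mkH02].
Qed.

Lemma cH_H3 (t : R) : H3 (cH t).
Proof. by split; split; rewrite !mxE /= mulr0 ?addr0 ?add0r. Qed.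

Lemma cH_E (t : R) : [/\ cH t 0 1 = 0, cH t 1 2%:R = 0 & cH t 0 2%:R = t].
Proof. by split; rewrite !mxE /= ?mulr1 ?mulr0 ?addr0 ?add0r. Qed.

Lemma cH_inj (s t : R) : cH s = cH t -> s = t.
Proof. by move=> e; have [_ _ <-] := cH_E s; rewrite e; have [_ _ ->] := cH_E t. Qed.

Lemma H3_cH g : H3 g -> g 0 1 = 0 -> g 1 2%:R = 0 -> g = cH (g 0 2%:R).
Proof.
move=> Hg e1 e2; have [c1 c2 c3] := cH_E (g 0 2%:R).
apply: H3_eq; [exact: Hg|exact: cH_H3|by rewrite c1|by rewrite c2|by rewrite c3].
Qed.

Lemma H3_comm g h : H3 g -> H3 h ->
  g *m h *m invmx g *m invmx h = cH (g 0 1 * h 1 2%:R - h 0 1 * g 1 2%:R).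
Proof.
move=> Hg Hh.
have [Hgi gi1 gi2 gi3] := H3_invE Hg.
have [Hhi hi1 hi2 hi3] := H3_invE Hh.
have [Hgh gh1 gh2 gh3] := H3_mul Hg Hh.
have [H2 e21 e22 e23] := H3_mul Hgh Hgi.
have [H3' e31 e32 e33] := H3_mul H2 Hhi.
have [c1 c2 c3] := cH_E (g 0 1 * h 1 2%:R - h 0 1 * g 1 2%:R).
apply: H3_eq; [exact: H3'|exact: cH_H3|..].
- by rewrite e31 e21 gh1 gi1 hi1 c1; ring.
- by rewrite e32 e22 gh2 gi2 hi2 c2; ring.
- rewrite e33 e23 ?e21 ?e22 ?gh1 ?gh2 ?gh3 ?gi1 ?gi2 ?gi3 ?hi1 ?hi2 ?hi3 c3; ring.
Qed.

End H3alg.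

From mathcomp Require Import lra ring.

Section Coord.
Variable R : realType.
Local Notation Rm := (measurableTypeR R).
Local Notation T3 := ((Rm * Rm) * Rm)%type.
Implicit Types g h : 'M[R]_3.

Lemma coordH_mul g h : H3 g -> H3 h ->
  (coordH (g *m h) : T3) = mulc (coordH g) (coordH h).
Proof.
move=> Hg Hh; have [_ e1 e2 e3] := H3_mul Hg Hh.
by rewrite /coordH /mulc /= e1 e2 e3.
Qed.

Lemma coordH_inv g : H3 g -> (coordH (invmx g) : T3) = invc (coordH g).
Proof.
move=> Hg; have [_ e1 e2 e3] := H3_invE Hg.
by rewrite /coordH /invc /= e1 e2 e3.
Qed.

Lemma coordH_inj g h : H3 g -> H3 h -> coordH g = coordH h -> g = h.
Proof.
move=> Hg Hh [e1 e2 e3]; exact: H3_eq.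
Qed.

Lemma coordH_mkH (t : T3) : (coordH (mkH t.1.1 t.1.2 t.2) : T3) = t.
Proof. by case: t => [[x y] z]; rewrite /coordH mkH01 mkH12 mkH02. Qed.

Lemma coordH1 : (coordH (1%:M : 'M[R]_3) : T3) = zc R.
Proof. by rewrite /coordH /zc !mxE. Qed.

End Coord.

Section Lat.
Variable R : realType.
Local Notation Rm := (measurableTypeR R).
Local Notation T3 := ((Rm * Rm) * Rm)%type.
Implicit Types g h : 'M[R]_3.
Variable L : set 'M[R]_3.
Hypothesis Llat : is_lattice L.
Variable xi : R.
Hypothesis Lxi : is_xi L xi.

Let LH : L `<=` @H3 R.
Proof. by case: Llat => -[]. Qed.
Let L1 : L 1%:M.
Proof. by case: Llat => -[]. Qed.
Let LM g h : L g -> L h -> L (g *m h).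
Proof. by case: Llat => -[] _ _ hM _ _ _; exact: hM. Qed.
Let LV g : L g -> L (invmx g).
Proof. by case: Llat => -[] _ _ _ hV _ _; exact: hV. Qed.

Lemma comm_int g h : L g -> L h ->
  exists m : int, g 0 1 * h 1 2%:R - h 0 1 * g 1 2%:R = m%:~R * xi.
Proof.
move=> Lg Lh.
have Lc : L (g *m h *m invmx g *m invmx h) by apply: LM; [apply: LM; [apply: LM|apply: LV]|apply: LV].
rewrite H3_comm in Lc; [|exact: LH|exact: LH].
set D := g 0 1 * h 1 2%:R - h 0 1 * g 1 2%:R.
have hD : (L `&` range (@cH R)) (cH D) by split => //; exists D.
case: Lxi => _ /seteqP[+ _] => /(_ _ hD) [m _ /cH_inj hm].
by exists m; rewrite hm.
Qed.


Lemma H3_1 : H3 (1%:M : 'M[R]_3).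
Proof. by split; split; rewrite !mxE. Qed.

Lemma close_entries g h (e : R) : H3 g -> H3 h ->
  `|h 0 1 - g 0 1| < e -> `|h 1 2%:R - g 1 2%:R| < e -> `|h 0 2%:R - g 0 2%:R| < e ->
  forall i j, `|h i j - g i j| < e.
Proof.
move=> [[g00 g11 g22] [g10 g20 g21]] [[h00 h11 h22] [h10 h20 h21]] e1 e2 e3.
have e0 : 0 < e by apply: le_lt_trans e1.
move=> i j; case: (ord3 i) => [->|[->|->]]; case: (ord3 j) => [->|[->|->]] //;
  by rewrite ?g00 ?g11 ?g22 ?g10 ?g20 ?g21 ?h00 ?h11 ?h22 ?h10 ?h20 ?h21 subrr normr0.
Qed.

Lemma rat_approx (x eps : R) : 0 < eps -> exists q : rat, `|x - ratr q| < eps.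
Proof.
move=> e0; have [q] := @rat_in_itvoo R (x - eps) (x + eps) ltac:(lra).
rewrite in_itv /= => /andP[h1 h2]; exists q; rewrite ltr_norml; apply/andP; split; lra.
Qed.

Let Lc : set T3 := [set (coordH g : T3) | g in L].

Let LcM s t : Lc s -> Lc t -> Lc (mulc s t).
Proof.
move=> [g Lg <-] [h Lh <-]; exists (g *m h); first exact: LM.
by rewrite coordH_mul //; exact: LH.
Qed.

Let LcV s : Lc s -> Lc (invc s).
Proof.
move=> [g Lg <-]; exists (invmx g); first exact: LV.
by rewrite coordH_inv //; exact: LH.
Qed.

Let disc_at g : L g -> exists2 e : R, 0 < e &
  forall h, L h -> (forall i j, `|h i j - g i j| < e) -> h = g.
Proof. by case: Llat => _ hd _; exact: hd. Qed.

Let disc0_ex : exists2 e : R, 0 < e & forall s, Lc s -> `|s.1.1| < e -> `|s.1.2| < e ->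
  `|s.2| < e -> s = zc R.
Proof.
have [e e0 he] := disc_at L1.
exists e => // s [h Lh <-] /= h1 h2 h3.
have -> : h = 1%:M.
  apply: he => //; apply: close_entries; [exact: H3_1|exact: LH|..];
  by rewrite !mxE /= subr0.
exact: coordH1.
Qed.

Let iota_ex : exists iota : T3 -> nat,
  forall s t, Lc s -> Lc t -> iota s = iota t -> s = t.
Proof.
have H : forall s : T3, exists q : (rat * rat) * rat, Lc s -> exists g, exists e : R,
  [/\ L g, (coordH g : T3) = s, 0 < e,
      (forall h, L h -> (forall i j, `|h i j - g i j| < e) -> h = g) &
      [/\ `|s.1.1 - ratr q.1.1| < e / 2, `|s.1.2 - ratr q.1.2| < e / 2 &
          `|s.2 - ratr q.2| < e / 2]].
  move=> s; case: (pselect (Lc s)) => [[g Lg gs]|ns]; last first.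
    by exists ((0, 0), 0)%R => /ns.
  have [e e0 he] := disc_at Lg.
  have e20 : 0 < e / 2 by lra.
  have [q1 hq1] := rat_approx s.1.1 e20.
  have [q2 hq2] := rat_approx s.1.2 e20.
  have [q3 hq3] := rat_approx s.2 e20.
  by exists ((q1, q2), q3) => _; exists g, e; split.
have [q hq] := choice H.
exists (fun s => pickle (q s)).
move=> s t Ls Lt /(pcan_inj (@pickleK_inv _)) eqq.
have [g [e [Lg gs e0 hg [a1 a2 a3]]]] := hq s Ls.
have [h [e' [Lh ht e'0 hh [b1 b2 b3]]]] := hq t Lt.
rewrite eqq in a1 a2 a3.
move: a1 a2 a3 b1 b2 b3; rewrite -gs -ht /coordH /= !ltr_norml.
move=> /andP[a1 a1'] /andP[a2 a2'] /andP[a3 a3'] /andP[b1 b1'] /andP[b2 b2'] /andP[b3 b3'].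
have ecl : forall E, e / 2 + e' / 2 <= E ->
   [/\ `|h 0 1 - g 0 1| < E, `|h 1 2%:R - g 1 2%:R| < E & `|h 0 2%:R - g 0 2%:R| < E].
  move=> E hE; rewrite !ltr_norml.
  by split; apply/andP; split; lra.
case: (leP e' e) => cmp.
- have [c1 c2 c3] := ecl e ltac:(lra).
  have := hg h Lh (close_entries (LH Lg) (LH Lh) c1 c2 c3).
  by move=> ehg; rewrite ehg.
- have [c1 c2 c3] := ecl e' ltac:(lra).
  have c1' : `|g 0 1 - h 0 1| < e' by rewrite distrC.
  have c2' : `|g 1 2%:R - h 1 2%:R| < e' by rewrite distrC.
  have c3' : `|g 0 2%:R - h 0 2%:R| < e' by rewrite distrC.
  have := hh g Lg (close_entries (LH Lh) (LH Lg) c1' c2' c3').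
  by move=> ehg; rewrite ehg.
Qed.

Lemma spanning : exists g1, exists g2,
  [/\ L g1, L g2 & g1 0 1 * g2 1 2%:R - g2 0 1 * g1 1 2%:R != 0].
Proof.
case: (pselect (exists g1, exists g2,
  [/\ L g1, L g2 & g1 0 1 * g2 1 2%:R - g2 0 1 * g1 1 2%:R != 0])) => // nex.
exfalso.
have ndet : forall g1 g2, L g1 -> L g2 ->
    g1 0 1 * g2 1 2%:R - g2 0 1 * g1 1 2%:R = 0.
  move=> g1 g2 L1' L2'; apply/eqP; apply/negPn/negP => hne.
  by apply: nex; exists g1, g2; split.
case: Llat => _ _ [F [mF Ffin Fu]].
have [e e0 disc0] := disc0_ex.
have [iota iota_inj] := iota_ex.
have Fcov : forall t : T3, exists s : T3, Lc s /\ F (mulc s t).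
  move=> t; have [gam [[Lgam Fg] _]] := Fu _ (mkH_H3 t.1.1 t.1.2 t.2).
  exists (coordH gam); split; first by exists gam.
  by rewrite -[X in mulc _ X](coordH_mkH t) -coordH_mul //; [exact: LH|exact: mkH_H3].
have Funiq : forall t s s' : T3, Lc s -> Lc s' -> F (mulc s t) -> F (mulc s' t) -> s = s'.
  move=> t _ _ [g1 L1' <-] [g2 L2' <-] F1 F2.
  have [gam [_ uq]] := Fu _ (mkH_H3 t.1.1 t.1.2 t.2).
  have hF gg : L gg -> F (mulc (coordH gg) t) -> gg = gam.
    move=> Lgg Fgg; apply/esym/uq; split => //.
    by rewrite coordH_mul ?coordH_mkH //; [exact: LH|exact: mkH_H3].
  by rewrite (hF _ L1' F1) (hF _ L2' F2).
case: (pselect (exists g0, L g0 /\ (g0 0 1 != 0 \/ g0 1 2%:R != 0))).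
  move=> [g0 [Lg0 nz]].
  apply: (@no_line R Lc LcM LcV e e0 disc0 iota iota_inj F mF Ffin Fcov Funiq
    (g0 1 2%:R) (- g0 0 1)).
  - have s1 := sqr_ge0 (g0 1 2%:R); have s2 := sqr_ge0 (- g0 0 1).
    case: nz => nz.
    + have : 0 < (- g0 0 1) ^+ 2 by rewrite lt_neqAle sqr_ge0 andbT eq_sym sqrf_eq0 oppr_eq0.
      lra.
    + have : 0 < (g0 1 2%:R) ^+ 2 by rewrite lt_neqAle sqr_ge0 andbT eq_sym sqrf_eq0.
      lra.
  - move=> _ [g Lg <-] /=; have := ndet g0 g Lg0 Lg; lra.
move=> nz.
apply: (@no_line R Lc LcM LcV e e0 disc0 iota iota_inj F mF Ffin Fcov Funiq 1 0).
- lra.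
- move=> _ [g Lg <-] /=.
  have -> : g 0 1 = 0.
    by apply/eqP; apply/negPn/negP => hne; apply: nz; exists g; split => //; left.
  lra.
Qed.

End Lat.

Lemma min_nat (P : nat -> Prop) : (exists n, P n) ->
  exists m, P m /\ forall k, P k -> (m <= k)%N.
Proof.
move=> [n Pn]; have ex : exists n, `[< P n >] by exists n; apply/asboolP.
case: (ex_minnP ex) => m /asboolP Pm hmin; exists m; split => // k Pk.
by apply: hmin; apply/asboolP.
Qed.

Section Hermite.
Variable H : int -> int -> Prop.
Hypothesis H0 : H 0 0.
Hypothesis HD : forall a b c d, H a b -> H c d -> H (a + c) (b + d).
Hypothesis HN : forall a b, H a b -> H (- a) (- b).

Lemma HZ (k : int) a b : H a b -> H (k * a) (k * b).
Proof.
move=> Hab.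
have Hn : forall n : nat, H (n%:Z * a) (n%:Z * b).
  elim=> [|n IH]; first by rewrite !mul0r.
  by rewrite -addn1 PoszD !mulrDl !mul1r; apply: HD.
case: k => n; first exact: Hn.
by rewrite NegzE !mulNr; apply: HN; exact: Hn.
Qed.

Lemma HB a b c d : H a b -> H c d -> H (a - c) (b - d).
Proof. by move=> h1 h2; apply: HD => //; apply: HN. Qed.

Lemma min_pos (S : int -> Prop) (HS0 : forall x y, S x -> S y -> S (x - y))
  (HSZ : forall (k : int) x, S x -> S (k * x)) (n : int) :
  n != 0 -> S n -> exists a, [/\ 0 < a, S a & forall x, S x -> exists k : int, x = k * a].
Proof.
move=> n0 Sn.
have ex : exists k, (0 < k)%N /\ S k%:Z.
  exists `|n|%N; split; first by rewrite absz_gt0.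
  case: (ltrgtP n 0) => [nlt|ngt|]; last by move/eqP: n0.
    have -> : `|n|%:Z = -1 * n by rewrite ltz0_abs // mulN1r.
    exact: HSZ.
  by rewrite gtz0_abs.
have [m [[m0 Sm] hm]] := min_nat ex.
exists m%:Z; split => //.
move=> x Sx; exists (x %/ m)%Z.
have r0 : 0 <= (x %% m)%Z by apply: modz_ge0; rewrite eqz_nat -lt0n.
have rlt : (x %% m)%Z < m%:Z by apply: ltz_pmod; rewrite ltz_nat.
have Sr : S (x %% m)%Z.
  have -> : (x %% m)%Z = x - (x %/ m)%Z * m%:Z by rewrite {2}(divz_eq x m%:Z) addrC addKr.
  by apply: HS0 => //; apply: HSZ.
case: (ltrgtP (x %% m)%Z 0) => [|hr|hr]; first by rewrite ltNge r0.
  have := hm `|(x %% m)%Z|%N; rewrite gez0_abs // => hm'.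
  have : (m <= `|(x %% m)%Z|)%N by apply: hm'; split => //; lia.
  move: rlt hr; clear; lia.
by rewrite {1}(divz_eq x m%:Z) hr addr0.
Qed.

Variable n : int.
Hypothesis n0 : n != 0.
Hypothesis Hn1 : H n 0.
Hypothesis Hn2 : H 0 n.

Lemma hermite : exists a1 b1 b2, [/\ a1 != 0, b2 != 0, H a1 b1, H 0 b2 &
  forall a b, H a b -> exists k l : int, a = k * a1 /\ b = k * b1 + l * b2].
Proof.
have [a1 [a10 [b1 Hab1] ha1]] := @min_pos (fun a => exists b, H a b)
  (fun x y '(ex_intro bx hx) '(ex_intro by' hy) => ex_intro _ (bx - by') (HB hx hy))
  (fun k x '(ex_intro bx hx) => ex_intro _ (k * bx) (HZ k hx)) n n0 (ex_intro _ 0 Hn1).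
have [b2 [b20 Hb2 hb2]] := @min_pos (fun b => H 0 b)
  (fun x y hx hy => eq_ind _ (fun z => H z (x - y)) (HB hx hy) _ (subrr 0))
  (fun k x hx => eq_ind _ (fun z => H z (k * x)) (HZ k hx) _ (mulr0 k)) n n0 Hn2.
exists a1, b1, b2; split => //; try by rewrite gt_eqF.
move=> a b Hab.
have [k ek] := ha1 a (ex_intro _ b Hab).
have H' : H 0 (b - k * b1).
  have := HB Hab (HZ k Hab1); by rewrite ek subrr.
have [l el] := hb2 _ H'.
by exists k, l; split => //; rewrite -el addrC subrK.
Qed.

End Hermite.

Section Two.
Variable R : realType.

Lemma det2 (A : 'M[R]_2) : \det A = A 0 0 * A 1 1 - A 0 1 * A 1 0.
Proof.
rewrite (expand_det_row _ 0) !big_ord_recr big_ord0 /= add0r /cofactor !det_mx11 !mxE /=.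
have e1 : (widen_ord (leqnSn 1) ord_max : 'I_2) = 0 by apply: val_inj.
have e2 : (ord_max : 'I_2) = 1 by apply: val_inj.
have e3 : lift (0 : 'I_2) (0 : 'I_1) = 1 by apply: val_inj.
have e4 : lift (1 : 'I_2) (0 : 'I_1) = 0 by apply: val_inj.
rewrite e1 e2 e3 e4 /= expr0 expr1; ring.
Qed.

Lemma mul2 (B : 'M[R]_2) (v : 'cV[R]_2) i : (B *m v) i 0 = B i 0 * v 0 0 + B i 1 * v 1 0.
Proof.
rewrite mxE !big_ord_recr big_ord0 /= add0r.
by congr (_ * _ + _ * _); congr (_ _ _); apply: val_inj.
Qed.

Lemma vec2_eq (u v : 'cV[R]_2) : u 0 0 = v 0 0 -> u 1 0 = v 1 0 -> u = v.
Proof.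
move=> e0 e1; apply/matrixP => i j; rewrite (ord1 j).
by case: (ord2 i) => ->.
Qed.

End Two.

Section PB.
Variable R : realType.
Implicit Types g h : 'M[R]_3.
Variable L : set 'M[R]_3.
Hypothesis Llat : is_lattice L.
Variable xi : R.
Hypothesis Lxi : is_xi L xi.

Let LH : L `<=` @H3 R.
Proof. by case: Llat => -[]. Qed.
Let L1 : L 1%:M.
Proof. by case: Llat => -[]. Qed.
Let LM g h : L g -> L h -> L (g *m h).
Proof. by case: Llat => -[] _ _ hM _ _ _; exact: hM. Qed.
Let LV g : L g -> L (invmx g).
Proof. by case: Llat => -[] _ _ _ hV _ _; exact: hV. Qed.

Lemma pH00 (g : 'M[R]_3) : pH g 0 0 = g 0 1. Proof. by rewrite mxE. Qed.
Lemma pH10 (g : 'M[R]_3) : pH g 1 0 = g 1 2%:R. Proof. by rewrite mxE. Qed.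

Lemma pbasis_ex : exists B, is_pbasis L B.
Proof.
have xi0 : 0 < xi by case: Lxi.
have xin0 : xi != 0 by rewrite gt_eqF.
have [g1 [g2 [Lg1 Lg2 D0]]] := spanning Llat.
have [n Dn] := comm_int Llat Lxi Lg1 Lg2.
have n0 : n != 0.
  apply/negP => /eqP n0; move: D0; rewrite Dn n0 mul0r eqxx.
  by [].
have nR0 : (n%:~R : R) != 0 by rewrite intr_eq0.
pose H a b := exists g, [/\ L g,
  a%:~R * xi = g 0 1 * g2 1 2%:R - g2 0 1 * g 1 2%:R &
  b%:~R * xi = g1 0 1 * g 1 2%:R - g 0 1 * g1 1 2%:R].
have H0 : H 0 0.
  by exists 1%:M; split => //; rewrite !mxE /= !mul0r ?mulr0 ?subrr.
have HD : forall a b c d, H a b -> H c d -> H (a + c) (b + d).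
  move=> a b c d [g [Lg ea eb]] [h [Lh ec ed]].
  have [_ m1 m2 m3] := H3_mul (LH Lg) (LH Lh).
  exists (g *m h); split; first exact: LM.
  - by rewrite m1 m2 intrD mulrDl ea ec; ring.
  - by rewrite m1 m2 intrD mulrDl eb ed; ring.
have HN : forall a b, H a b -> H (- a) (- b).
  move=> a b [g [Lg ea eb]].
  have [_ i1 i2 i3] := H3_invE (LH Lg).
  exists (invmx g); split; first exact: LV.
  - by rewrite i1 i2 intrN mulNr ea; ring.
  - by rewrite i1 i2 intrN mulNr eb; ring.
have Hn1 : H n 0.
  by exists g1; split => //; rewrite ?mul0r -?Dn; ring.
have Hn2 : H 0 n.
  by exists g2; split => //; rewrite ?mul0r -?Dn; ring.
have [a1 [b1 [b2 [a10 b20 Hab1 Hb2 hH]]]] := hermite H0 HD HN n0 Hn1 Hn2.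
have HZ' : forall k a b, H a b -> H (k * a) (k * b) by move=> k a b; exact: HZ.
have cramer : forall a b g,
    a%:~R * xi = g 0 1 * g2 1 2%:R - g2 0 1 * g 1 2%:R ->
    b%:~R * xi = g1 0 1 * g 1 2%:R - g 0 1 * g1 1 2%:R ->
    g 0 1 = (a%:~R * g1 0 1 + b%:~R * g2 0 1) / n%:~R /\
    g 1 2%:R = (a%:~R * g1 1 2%:R + b%:~R * g2 1 2%:R) / n%:~R.
  move=> a b g ea eb.
  have e1 : (n%:~R * g 0 1) * xi = (a%:~R * g1 0 1 + b%:~R * g2 0 1) * xi.
    transitivity ((g1 0 1 * g2 1 2%:R - g2 0 1 * g1 1 2%:R) * g 0 1); first by rewrite Dn; ring.
    by rewrite [in RHS]mulrDl (mulrAC a%:~R) (mulrAC b%:~R) ea eb; ring.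
  have e2 : (n%:~R * g 1 2%:R) * xi = (a%:~R * g1 1 2%:R + b%:~R * g2 1 2%:R) * xi.
    transitivity ((g1 0 1 * g2 1 2%:R - g2 0 1 * g1 1 2%:R) * g 1 2%:R); first by rewrite Dn; ring.
    by rewrite [in RHS]mulrDl (mulrAC a%:~R) (mulrAC b%:~R) ea eb; ring.
  split.
  - by rewrite -(mulIf xin0 e1) mulrC mulKf.
  - by rewrite -(mulIf xin0 e2) mulrC mulKf.
pose B : 'M[R]_2 := \matrix_(i, j)
  (if j == 0 then
     (if i == 0 then (a1%:~R * g1 0 1 + b1%:~R * g2 0 1) / n%:~R
      else (a1%:~R * g1 1 2%:R + b1%:~R * g2 1 2%:R) / n%:~R)
   else (if i == 0 then b2%:~R * g2 0 1 / n%:~R else b2%:~R * g2 1 2%:R / n%:~R)).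
exists B; split.
  rewrite unitmxE unitfE det2 !mxE /=.
  have -> : (a1%:~R * g1 0 1 + b1%:~R * g2 0 1) / n%:~R * (b2%:~R * g2 1 2%:R / n%:~R) -
     b2%:~R * g2 0 1 / n%:~R * ((a1%:~R * g1 1 2%:R + b1%:~R * g2 1 2%:R) / n%:~R) =
     a1%:~R * b2%:~R * (g1 0 1 * g2 1 2%:R - g2 0 1 * g1 1 2%:R) / (n%:~R ^+ 2).
    by field.
  rewrite !mulf_neq0 ?invr_neq0 ?expf_neq0 ?intr_eq0 //.
apply/seteqP; split.
  move=> _ [g Lg <-].
  have [a ea] := comm_int Llat Lxi Lg Lg2.
  have [b eb] := comm_int Llat Lxi Lg1 Lg.
  have Hab : H a b by exists g; split => //; rewrite ?ea ?eb.
  have [k [l [ek el]]] := hH a b Hab.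
  have [c1 c2] := cramer a b g (esym ea) (esym eb).
  exists (map_mx intr (\col_i (if i == 0 then k else l) : 'cV[int]_2)).
    by exists (\col_i (if i == 0 then k else l)).
  apply: vec2_eq; rewrite mul2 !mxE /= ?c1 ?c2 ek el !intrD !intrM; field; exact: nR0.
move=> _ [_ [z _ <-] <-].
have Hab : H (z 0 0 * a1 + z 1 0 * 0) (z 0 0 * b1 + z 1 0 * b2).
  by apply: HD; apply: HZ'.
rewrite mulr0 addr0 in Hab.
have [g [Lg ea eb]] := Hab.
have [c1 c2] := cramer _ _ g ea eb.
exists g => //.
apply: vec2_eq; rewrite mul2 !mxE /= ?c1 ?c2 !intrD !intrM; field; exact: nR0.
Qed.

End PB.

Section Fin.
Variable R : realType.

Lemma mul22 (M N : 'M[R]_2) r c : (M *m N) r c = M r 0 * N 0 c + M r 1 * N 1 c.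
Proof.
rewrite mxE !big_ord_recr big_ord0 /= add0r.
by congr (_ * _ + _ * _); congr (_ _ _); apply: val_inj.
Qed.

Definition evec (c : 'I_2) : 'cV[int]_2 := \col_i (if i == c then 1 else 0).

Lemma col_ext (P : 'M[R]_2) r c : (P *m map_mx intr (evec c)) r 0 = P r c.
Proof.
rewrite mul2 !mxE; case: (ord2 c) => ->; rewrite /= ?mulr1 ?mulr0 ?addr0 ?add0r //.
Qed.

End Fin.

Theorem proposition5p4 (R : realType) (G : nat -> set 'M[R]_3)
    (Glat : forall j, is_lattice (G j))
    (Gnest : forall j, G j.+1 `<=` G j)
    (A : 'M[R]_2) (As : nat -> 'M[int]_2)
    (Srep : off_rational_rep (S_Gamma G) A As) :
  xi_Gamma G `<=` tau A As.
Proof.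
move=> _ [j [xi [Lxi [m ->]]]].
have Llat := Glat j.
have xi0 : 0 < xi by case: Lxi.
have [B [Bu pB]] := pbasis_ex Llat Lxi.
have colL : forall c : 'I_2, exists g, G j g /\ pH g = B *m map_mx intr (evec c).
  move=> c; have : (@pH R @` G j) (B *m map_mx intr (evec c)).
    by rewrite pB; exists (map_mx intr (evec c)) => //; exists (evec c).
  by move=> [g Lg eg]; exists g.
have [g0 [Lg0 eg0]] := colL 0.
have [g1 [Lg1 eg1]] := colL 1.
have [kk ekk] := comm_int Llat Lxi Lg0 Lg1.
have detB : \det B = kk%:~R * xi.
  rewrite det2 -ekk.
  have h00 := congr1 (fun v : 'cV[R]_2 => v 0 0) eg0; have h10 := congr1 (fun v : 'cV[R]_2 => v 1 0) eg0.
  have h01 := congr1 (fun v : 'cV[R]_2 => v 0 0) eg1; have h11 := congr1 (fun v : 'cV[R]_2 => v 1 0) eg1.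
  move: h00 h10 h01 h11; rewrite /= pH00 pH10 pH00 pH10 !col_ext => -> -> -> ->.
  ring.
have dB0 : \det B != 0 by rewrite -unitfE -unitmxE.
have kk0 : (kk%:~R : R) != 0.
  by apply/eqP => k0; move: dB0; rewrite detB k0 mul0r eqxx.
case: Srep => Au AsU nest Seq.
pose K := invmx B^T.
pose img i := [set (invmx (map_mx intr (As i)) *m v : 'cV[R]_2) | v in Zvec (R:=R)].
have mono : forall i k, img i `<=` img (i + k)%N.
  move=> i; elim=> [|k IH]; first by rewrite addn0.
  by move=> v /IH; rewrite addnS; exact: nest.
have mono' : forall i I, (i <= I)%N -> img i `<=` img I.
  by move=> i I iI; rewrite -(subnKC iI); exact: mono.
have inS : forall c : 'I_2, exists i, exists z : 'cV[int]_2,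
    K *m map_mx intr (evec c) = A *m (invmx (map_mx intr (As i)) *m map_mx intr z).
  move=> c.
  have : S_Gamma G (K *m map_mx intr (evec c)).
    exists j => //; exists B; split => //.
    by exists (map_mx intr (evec c)) => //; exists (evec c).
  rewrite Seq => -[w [i _ [_ [z _ <-] <-]] <-].
  by exists i, z.
have [i0 [z0 ez0]] := inS 0.
have [i1 [z1 ez1]] := inS 1.
pose I := maxn i0 i1.
have [z0' ez0'] : exists z : 'cV[int]_2,
    (invmx (map_mx intr (As I)) *m map_mx intr z : 'cV[R]_2) =
    invmx (map_mx intr (As i0)) *m map_mx intr z0.
  have : img I (invmx (map_mx intr (As i0)) *m map_mx intr z0).
    by apply: (mono' i0 I (leq_maxl _ _)); exists (map_mx intr z0) => //; exists z0.
  by move=> [_ [z _ <-] ez]; exists z.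
have [z1' ez1'] : exists z : 'cV[int]_2,
    (invmx (map_mx intr (As I)) *m map_mx intr z : 'cV[R]_2) =
    invmx (map_mx intr (As i1)) *m map_mx intr z1.
  have : img I (invmx (map_mx intr (As i1)) *m map_mx intr z1).
    by apply: (mono' i1 I (leq_maxr _ _)); exists (map_mx intr z1) => //; exists z1.
  by move=> [_ [z _ <-] ez]; exists z.
pose Zi : 'M[int]_2 := \matrix_(r, c) (if c == 0 then z0' r 0 else z1' r 0).
pose M : 'M[R]_2 := A *m invmx (map_mx intr (As I)).
have KE : K = M *m map_mx intr Zi.
  apply/matrixP => r c.
  rewrite -col_ext.
  case: (ord2 c) => ->.
  - by rewrite ez0 -ez0' mulmxA -/M mul2 [RHS]mul22; congr (_ * _ + _ * _); rewrite !mxE.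
  - by rewrite ez1 -ez1' mulmxA -/M mul2 [RHS]mul22; congr (_ * _ + _ * _); rewrite !mxE.
have hdet : (\det B)^-1 = \det A * ((\det (As I))%:~R)^-1 * ((\det Zi)%:~R : R).
  have := congr1 determinant KE.
  by rewrite /K det_inv det_tr => ->; rewrite /M !det_mulmx det_inv !det_map_mx.
have dI0 : ((\det (As I))%:~R : R) != 0.
  by have := AsU I; rewrite unitmxE unitfE det_map_mx.
exists I, (m * kk * \det Zi).
rewrite !intrM.
transitivity (m%:~R * kk%:~R * (\det B)^-1).
  by rewrite detB; field; rewrite kk0 gt_eqF.
by rewrite hdet; field.
Qed.
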